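(* Let $(\mathfrak{g},V,\Theta)$ be a Lie-Leibniz triple, with associated graded Lie algebra $T_{\leq-1}$ and differential $\partial=(\partial_{-i}:T_{-i-1}\to T_{-i})_{i\geq1}$. For each $i\geq1$ let $R_{-i}$ be the cyclic $\mathfrak{g}$-submodule of $\mathrm{Hom}(T_{-i-1},T_{-i})$ generated by $\partial_{-i}$. Then for every $i\geq1$ there exists a surjective morphism of $\mathfrak{g}$-modules $\mu_{-i}:R_\Theta\to R_{-i}$ such that $\partial_{-i}=\mu_{-i}(\Theta)$.
   Context: A (left) Leibniz algebra is a vector space $V$ with bilinear $\circ$ satisfying $x\circ(y\circ z)=(x\circ y)\circ z+y\circ(x\circ z)$; $\{x,y\}=\frac12(x\circ y+y\circ x)$. A Lie-Leibniz triple $(\mathfrak{g},V,\Theta)$ consists of a Lie algebra $\mathfrak{g}$, a $\mathfrak{g}$-module $V$ (action $a\cdot x$) with a Leibniz product $\circ$, and a linear map $\Theta:V\to\mathfrak{g}$ with $x\circ y=\Theta(x)\cdot y$ and $\Theta(x\circ y)=[\Theta(x),\Theta(y)]$. $\mathfrak{g}$ acts on $\mathrm{Hom}(V,\mathfrak{g})$ by $(a\cdot\Xi)(x)=[a,\Xi(x)]-\Xi(a\cdot x)$, and $R_\Theta$ is the cyclic $\mathfrak{g}$-submodule generated by $\Theta$ (spanned by $\Theta$ and all $a_1\cdot(a_2\cdot(\cdots(a_m\cdot\Theta)))$). Similarly $\mathfrak g$ acts on $\mathrm{Hom}(T_{-i-1},T_{-i})$ by $(a\cdot f)(x)=a\cdot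 f(x)-f(a\cdot x)$. Associated graded Lie algebra: let $K$ be the largest $\mathfrak{g}$-submodule of $S^2(V)$ in the kernel of $x\odot y\mapsto\{x,y\}$; $F$ the free graded Lie algebra on $V[1]$ (degree $-1$), $F_{-2}\cong S^2(V)$, $\mathfrak g$ acting by derivations; $K_{-2}=K$, $K_{-i}=\sum_{j=1}^{i-2}[F_{-j},K_{-i+j}]$ ($i\geq3$); $T_{\leq-1}=F/K_\bullet$, $T_{-1}=V[1]$, with induced bracket $\llbracket\,.\,,.\,\rrbracket$ and $\mathfrak{g}$-action. With $\mathfrak{h}=\mathrm{Im}\Theta$, $\partial$ is the unique family of $\mathfrak{h}$-equivariant linear maps $\partial_{-i}:T_{-i-1}\to T_{-i}$ with $\partial\llbracket u,v\rrbracket=2\{u,v\}$, $\partial\llbracket u,x\rrbracket=\Theta(u)\cdot x-\llbracket u,\partial x\rrbracket$, $\partial\llbracket x,y\rrbracket=\llbracket\partial x,y\rrbracket+(-1)^{|x|}\llbracket x,\partial y\rrbracket$ for $u,v\in T_{-1}$, $x,y\in T_{\leq-2}$. *)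

(* Defs.v *)
From HB Require Import structures.
From mathcomp Require Import all_boot all_order all_algebra.
Set Implicit Arguments. Unset Strict Implicit. Unset Printing Implicit Defensive.
Import GRing.Theory.
Local Open Scope ring_scope.

Section LLDefs.
Variable k : fieldType.

Definition bilin (U W X : lmodType k) (f : U -> W -> X) : Prop :=
  (forall u, linear (f u)) /\ (forall w, linear (fun u => f u w)).

Definition is_lie (g : lmodType k) (brg : g -> g -> g) : Prop :=
  [/\ bilin brg, (forall a, brg a a = 0) &
      (forall a b c, brg a (brg b c) = brg (brg a b) c + brg b (brg a c))].

Definition is_module (g : lmodType k) (brg : g -> g -> g) (V : lmodType k)
  (act : g -> V -> V) : Prop :=
  bilin act /\
  (forall a b x, act (brg a b) x = act a (act b x) - act b (act a x)).

Definition lprod (g V : lmodType k) (act : g -> V -> V) (Theta : V -> g)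
  (x y : V) : V := act (Theta x) y.

Definition lsym (g V : lmodType k) (act : g -> V -> V) (Theta : V -> g)
  (x y : V) : V := 2%:R^-1 *: (lprod act Theta x y + lprod act Theta y x).

Definition is_LL_triple (g : lmodType k) (brg : g -> g -> g) (V : lmodType k)
  (act : g -> V -> V) (Theta : V -> g) : Prop :=
  [/\ is_lie brg, is_module brg act, linear Theta &
      (forall x y, Theta (lprod act Theta x y) = brg (Theta x) (Theta y))].

Definition castT (L : nat -> lmodType k) (m n : nat) (e : m = n) (x : L m) : L n :=
  eq_rect m (fun p => (L p : Type)) x n e.

(* graded Lie algebra L = (+)_{n} L_{-n}, L n = degree -n part, L 0 = 0;
   Koszul sign (-1)^{|x||y|} = (-1)^{mn} for x in L m, y in L n *)
Definition is_glie (L : nat -> lmodType k)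
  (br : forall m n, L m -> L n -> L (m + n)) : Prop :=
  [/\ (forall x : L 0, x = 0),
      (forall m n, bilin (br m n)),
      (forall m n (x : L m) (y : L n),
          br m n x y = - ((-1) ^+ (m * n) *: castT (addnC n m) (br n m y x))) &
      (forall m n p (x : L m) (y : L n) (z : L p),
          br m (n + p) x (br n p y z) =
          castT (esym (addnA m n p)) (br (m + n) p (br m n x y) z)
          + (-1) ^+ (m * n) *: castT (addnCA n m p) (br n (m + p) y (br m p x z)))].

Definition glie_morph (L : nat -> lmodType k) (br : forall m n, L m -> L n -> L (m + n))
  (L' : nat -> lmodType k) (br' : forall m n, L' m -> L' n -> L' (m + n))
  (f : forall n, L n -> L' n) : Prop :=
  (forall n, linear (f n)) /\
  (forall m n (x : L m) (y : L n), f (m + n) (br m n x y) = br' m n (f m x) (f n y)).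

Definition is_free_glie (V : lmodType k) (L : nat -> lmodType k)
  (br : forall m n, L m -> L n -> L (m + n)) (iota : V -> L 1) : Prop :=
  [/\ is_glie br, linear iota &
   forall (L' : nat -> lmodType k) (br' : forall m n, L' m -> L' n -> L' (m + n)),
     is_glie br' -> forall phi : V -> L' 1, linear phi ->
     exists f : forall n, L n -> L' n,
       [/\ glie_morph br br' f, (forall v, f 1 (iota v) = phi v) &
        forall f' : forall n, L n -> L' n, glie_morph br br' f' ->
          (forall v, f' 1 (iota v) = phi v) -> forall n x, f' n x = f n x]].

Definition is_gaction (g : lmodType k) (brg : g -> g -> g) (L : nat -> lmodType k)
  (br : forall m n, L m -> L n -> L (m + n)) (act : forall n, g -> L n -> L n) : Prop :=
  [/\ (forall n, is_module brg (act n)) &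
      (forall m n a (x : L m) (y : L n),
          act (m + n) a (br m n x y) = br m n (act m a x) y + br m n x (act n a y))].

Definition is_submod (g M : lmodType k) (act : g -> M -> M) (W : M -> Prop) : Prop :=
  [/\ W 0, (forall x y, W x -> W y -> W (x + y)),
      (forall c x, W x -> W (c *: x)) & (forall a x, W x -> W (act a x))].

(* K_{-2}: the largest g-submodule of F_{-2} (= S^2 V) contained in ker beta,
   i.e. the union (= sum) of all g-submodules contained in ker beta *)
Definition K2 (g : lmodType k) (V : lmodType k) (F : nat -> lmodType k)
  (actF : forall n, g -> F n -> F n) (beta : F 2 -> V) (z : F 2) : Prop :=
  exists W : F 2 -> Prop,
    [/\ is_submod (actF 2) W, (forall w, W w -> beta w = 0) & W z].

(* K_{-2} = K2, K_{-i} = sum_{j=1}^{i-2} [F_{-j}, K_{-i+j}] (i >= 3) *)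
Inductive Kid (F : nat -> lmodType k) (brF : forall m n, F m -> F n -> F (m + n))
  (K : F 2 -> Prop) : forall n, F n -> Prop :=
| Kid_base (z : F 2) : K z -> Kid brF K z
| Kid_br j m (x : F j) (y : F m) : (0 < j)%N -> Kid brF K y -> Kid brF K (brF j m x y)
| Kid_zero n : Kid brF K (0 : F n)
| Kid_add n (z w : F n) : Kid brF K z -> Kid brF K w -> Kid brF K (z + w).

Definition is_quotient_map (g : lmodType k) (F : nat -> lmodType k)
  (brF : forall m n, F m -> F n -> F (m + n)) (actF : forall n, g -> F n -> F n)
  (K : F 2 -> Prop)
  (T : nat -> lmodType k) (brT : forall m n, T m -> T n -> T (m + n))
  (actT : forall n, g -> T n -> T n) (pi : forall n, F n -> T n) : Prop :=
  [/\ glie_morph brF brT pi,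
      (forall n a (x : F n), pi n (actF n a x) = actT n a (pi n x)),
      (forall n (t : T n), exists x, pi n x = t) &
      (forall n (x : F n), pi n x = 0 <-> Kid brF K x)].

(* the differential d i = partial_{-i} : T_{-i-1} -> T_{-i}, with
   j := pi 1 \o iota : V ~ T_{-1} *)
Definition is_LL_differential (g : lmodType k) (V : lmodType k)
  (actV : g -> V -> V) (Theta : V -> g) (T : nat -> lmodType k)
  (brT : forall m n, T m -> T n -> T (m + n)) (actT : forall n, g -> T n -> T n)
  (j : V -> T 1) (d : forall i, T i.+1 -> T i) : Prop :=
  [/\ (forall i, linear (d i)),
      (forall i v (z : T i.+1), d i (actT i.+1 (Theta v) z) = actT i (Theta v) (d i z)),
      (forall u v, d 1 (brT 1 1 (j u) (j v)) = 2%:R *: j (lsym actV Theta u v)),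
      (forall n v (x : T n.+2),
          d n.+2 (brT 1 n.+2 (j v) x) =
          actT n.+2 (Theta v) x - brT 1 n.+1 (j v) (d n.+1 x)) &
      (forall m n (x : T m.+2) (y : T n.+2),
          d (m + n.+2).+1 (brT m.+2 n.+2 x y) =
          brT m.+1 n.+2 (d m.+1 x) y
          + (-1) ^+ m *: castT (congr1 S (esym (addnS m n.+1)))
                              (brT m.+2 n.+1 x (d n.+1 y)))].

Definition homact (G : Type) (A B : lmodType k) (actA : G -> A -> A)
  (actB : G -> B -> B) (a : G) (f : A -> B) : A -> B :=
  fun x => actB a (f x) - f (actA a x).

Inductive cyc_sub (G : Type) (A B : lmodType k) (act : G -> (A -> B) -> (A -> B))
  (f0 : A -> B) : (A -> B) -> Prop :=
| cyc_gen : cyc_sub act f0 f0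
| cyc_zero : cyc_sub act f0 (fun _ => 0)
| cyc_add f h : cyc_sub act f0 f -> cyc_sub act f0 h -> cyc_sub act f0 (fun x => f x + h x)
| cyc_scale (c : k) f : cyc_sub act f0 f -> cyc_sub act f0 (fun x => c *: f x)
| cyc_act a f : cyc_sub act f0 f -> cyc_sub act f0 (act a f).

End LLDefs.

(* Main.v *)
Require Import Defs.
From HB Require Import structures.
From mathcomp Require Import all_boot all_order all_algebra.
From mathcomp Require Import ssrAC.
From Stdlib Require Import ClassicalEpsilon FunctionalExtensionality.
Import GRing.Theory.
Local Open Scope ring_scope.
Set Implicit Arguments. Unset Strict Implicit. Unset Printing Implicit Defensive.

Definition pb (P : Prop) : bool := if excluded_middle_informative P then true else false.
Lemma pbP (P : Prop) : reflect P (pb P).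
Proof. rewrite /pb; case: excluded_middle_informative => h; by constructor. Qed.

Section SubL.
Variables (k : fieldType) (V : lmodType k) (P : V -> Prop).
Hypotheses (P0 : P 0) (PD : forall x y, P x -> P y -> P (x + y))
  (PZ : forall (c : k) x, P x -> P (c *: x)).
Definition Pb : {pred V} := fun x => pb (P x).
Lemma Pb_closed : subsemimod_closed Pb.
Proof.
split; [split|].
- exact/pbP.
- by move=> x y /pbP hx /pbP hy; apply/pbP; apply: PD.
- by move=> c x /pbP hx; apply/pbP; apply: PZ.
Qed.
HB.instance Definition _ := GRing.isSubmodClosed.Build k V Pb Pb_closed.
Definition subL := {x : V | x \in Pb}.
HB.instance Definition _ := [isSub for (@sval V (fun x => x \in Pb)) : subL -> V].
HB.instance Definition _ := [Choice of subL by <:].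
HB.instance Definition _ := [SubChoice_isSubLmodule of subL by <:].
Definition subLm : lmodType k := subL.
End SubL.
Section T.
Variables (k : fieldType) (V : lmodType k) (P : V -> Prop).
Hypotheses (P0 : P 0) (PD : forall x y, P x -> P y -> P (x + y))
  (PZ : forall (c : k) x, P x -> P (c *: x)).
Local Notation L := (subLm P0 PD PZ).
Lemma svalD (x y : L) : sval (x + y) = sval x + sval y.
Proof. by []. Qed.
Lemma svalZ (c : k) (x : L) : sval (c *: x) = c *: sval x.
Proof. by []. Qed.
Lemma sval0 : sval (0 : L) = 0.
Proof. by []. Qed.
Lemma sval_inj : injective (sval : L -> V).
Proof. exact: val_inj. Qed.
End T.

Set Implicit Arguments.

Section Lin.
Variable k : fieldType.
Lemma linD (U W : lmodType k) (f : U -> W) : linear f -> forall x y, f (x + y) = f x + f y.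
Proof. by move=> h x y; have := h 1 x y; rewrite !scale1r. Qed.
Lemma linZ (U W : lmodType k) (f : U -> W) : linear f -> forall c x, f (c *: x) = c *: f x.
Proof. by move=> h c x; apply: (scalable_linear h). Qed.
Lemma lin0 (U W : lmodType k) (f : U -> W) : linear f -> f 0 = 0.
Proof. by move=> h; have := linZ h 0 0; rewrite !scale0r. Qed.
Lemma linN (U W : lmodType k) (f : U -> W) : linear f -> forall x, f (- x) = - f x.
Proof. by move=> h x; rewrite -scaleN1r linZ // scaleN1r. Qed.
Lemma linB (U W : lmodType k) (f : U -> W) : linear f -> forall x y, f (x - y) = f x - f y.
Proof. by move=> h x y; rewrite linD // linN. Qed.
Lemma castK (L : nat -> lmodType k) m n (e : m = n) (x : L m) :
  castT (esym e) (castT e x) = x.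
Proof. by case: n / e. Qed.
Lemma castD (L : nat -> lmodType k) m n (e : m = n) (x y : L m) :
  castT e (x + y) = castT e x + castT e y.
Proof. by case: n / e. Qed.
Lemma castZ (L : nat -> lmodType k) m n (e : m = n) c (x : L m) :
  castT e (c *: x) = c *: castT e x.
Proof. by case: n / e. Qed.
End Lin.

Unset Implicit Arguments.
Section GenS.
Variables (k : fieldType) (V : lmodType k) (F : nat -> lmodType k)
  (brF : forall m n, F m -> F n -> F (m + n)) (iota : V -> F 1).
Hypothesis HF : is_free_glie brF iota.

Inductive Gen : forall n, F n -> Prop :=
| G1 v : Gen 1 (iota v)
| Gbr n v (y : F n) : Gen n y -> Gen (1%N + n) (brF 1%N n (iota v) y)
| G0 n : Gen n 0
| GD n (x y : F n) : Gen n x -> Gen n y -> Gen n (x + y)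
| GZ n c (x : F n) : Gen n x -> Gen n (c *: x).
Arguments Gen {n}.

Lemma Gen_cast {m n} (e : m = n) (x : F m) : Gen x -> Gen (castT e x).
Proof. by case: n / e. Qed.

Lemma Gen_uncast {m n} (e : m = n) (x : F m) : Gen (castT e x) -> Gen x.
Proof. by case: n / e. Qed.

Lemma HFg : is_glie brF. Proof. by case: HF. Qed.

Lemma Gen_br {m} (x : F m) : Gen x -> forall n (y : F n), Gen y -> Gen (brF m n x y).
Proof.
have [_ Hbil _ Hjac] := HFg.
elim=> {m x}.
- by move=> v n y Hy; apply: Gbr.
- move=> m v x Hx IH n y Hy.
  have J := Hjac 1%N m n (iota v) x y.
  set Z := brF _ _ (brF _ _ _ _) y in J.
  apply: (Gen_uncast (esym (addnA 1%N m n))).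
  have -> : castT (esym (addnA 1%N m n)) Z =
     brF 1%N (m + n) (iota v) (brF m n x y) +
     (-1) *: ((-1) ^+ (1 * m) *: castT (addnCA m 1%N n) (brF m (1 + n)%N x (brF 1%N n (iota v) y))).
    by rewrite J scaleN1r addrK.
  apply: GD; first by apply: Gbr; apply: IH.
  by apply: GZ; apply: GZ; apply: Gen_cast; apply: IH; apply: Gbr.
- move=> m n y _; have := lin0 ((Hbil m n).2 y) => /= ->; exact: G0.
- move=> m x1 x2 _ IH1 _ IH2 n y Hy.
  rewrite (linD ((Hbil m n).2 y) x1 x2); apply: GD; [exact: IH1|exact: IH2].
- move=> m c x _ IH n y Hy.
  rewrite (linZ ((Hbil m n).2 y) c x); apply: GZ; exact: IH.
Qed.

Definition L' n := subLm (G0 n) (GD n) (GZ n).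
Lemma getP {n} (x : L' n) : Gen (sval x).
Proof. by case: x => /= x /pbP. Qed.
Definition mk {n} (x : F n) (h : Gen x) : L' n := exist _ x (introT (pbP _) h).
Definition brL {m n} (x : L' m) (y : L' n) : L' (m + n) := mk (brF m n (sval x) (sval y)) (Gen_br (sval x) (getP x) n (sval y) (getP y)).
Lemma svD {n} (x y : L' n) : sval (x + y) = sval x + sval y. Proof. by []. Qed.
Lemma svZ {n} c (x : L' n) : sval (c *: x) = c *: sval x. Proof. by []. Qed.
Lemma svN {n} (x : L' n) : sval (- x) = - sval x. Proof. by []. Qed.
Lemma sv0 n : sval (0 : L' n) = 0. Proof. by []. Qed.
Lemma svinj {n} : injective (sval : L' n -> F n). Proof. exact: sval_inj. Qed.
Lemma svcast {m n} (e : m = n) (x : L' m) : sval (castT e x) = castT e (sval x).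
Proof. by case: n / e. Qed.
Lemma svbr {m n} (x : L' m) (y : L' n) : sval (brL x y) = brF m n (sval x) (sval y).
Proof. by []. Qed.

Lemma glie_L : is_glie (@brL).
Proof.
have [H0 Hbil Hanti Hjac] := HFg.
split.
- by move=> x; apply: svinj; rewrite sv0; apply: H0.
- move=> m n; split=> [x|y] c u v; apply: svinj;
    rewrite svD svZ !svbr svD svZ.
  + exact: (Hbil m n).1.
  + exact: ((Hbil m n).2 (sval y)).
- move=> m n x y; apply: svinj.
  by rewrite svN svZ svcast !svbr Hanti.
- move=> m n p x y z; apply: svinj.
  by rewrite svD svZ !svcast !svbr Hjac.
Qed.

Lemma Gen_all n (x : F n) : Gen x.
Proof.
have [HgF Hiota Hu] := HF.
pose phi v : L' 1 := mk (iota v) (G1 v).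
have phi_lin : linear phi.
  move=> c u v; apply: svinj; rewrite svD svZ /=; exact: Hiota.
have [f [[Hflin Hfbr] Hfphi _]] := Hu _ (@brL) glie_L phi phi_lin.
have [f0 [_ _ Huniq]] := Hu F brF HgF iota Hiota.
have e1 := Huniq (fun n x => x) (conj (fun n c u v => erefl) (fun m n x y => erefl)) (fun v => erefl).
have m2 : glie_morph brF brF (fun n x => sval (f n x)).
  split.
  - move=> m c u v /=; rewrite (Hflin m c u v) svD svZ //.
  - by move=> m m' u v /=; rewrite Hfbr svbr.
have e2 := Huniq (fun n x => sval (f n x)) m2 (fun v => ltac:(by rewrite /= Hfphi)).
have E : sval (f n x) = x by have := e2 n x; have := e1 n x => /= -> ->.
rewrite -E; exact: getP.
Qed.
End GenS.

Set Implicit Arguments.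

Section ZM.
Variable M : zmodType.
Lemma zmA (p q r1 r2 r3 r4 : M) :
  p + q - ((r1 + r2) + (r3 + r4)) = (p - r3 - r1) + (q - r2 - r4).
Proof. by rewrite !opprD !addrA [LHS](ACl (1*5*3*2*4*6)). Qed.
Lemma zmB (A B C D E G : M) :
  A - (B + C) - ((D - B) + (E - G)) = ((A - E) - D) - (C - G).
Proof.
rewrite !opprD !opprK !addrA [LHS](ACl (1*2*5*6*4*3*7)).
by rewrite /= subrK.
Qed.
End ZM.

Set Implicit Arguments.
Inductive tm (k : fieldType) (g : lmodType k) : Type :=
| tG | tZ | tA of tm g & tm g | tS of k & tm g | tAct of g & tm g.
Arguments tG {k g}. Arguments tZ {k g}.

Fixpoint ev (k : fieldType) (g : lmodType k) (A B : lmodType k)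
  (act : g -> (A -> B) -> (A -> B)) (f0 : A -> B) (t : tm g) : A -> B :=
  match t with
  | tG => f0
  | tZ => fun _ => 0
  | tA t s => fun x => ev act f0 t x + ev act f0 s x
  | tS c t => fun x => c *: ev act f0 t x
  | tAct a t => act a (ev act f0 t)
  end.

Lemma cyc_ev (k : fieldType) (g : lmodType k) (A B : lmodType k)
  (act : g -> (A -> B) -> (A -> B)) (f0 : A -> B) f :
  cyc_sub act f0 f <-> exists t, ev act f0 t = f.
Proof.
split.
- elim=> [|||c h _ [t <-]|a h _ [t <-]].
  + by exists tG.
  + by exists tZ.
  + by move=> h1 h2 _ [t1 <-] _ [t2 <-]; exists (tA t1 t2).
  + by exists (tS c t).
  + by exists (tAct a t).
- case=> t <-; elim: t => /= [|||c t IH|a t IH].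
  + exact: cyc_gen.
  + exact: cyc_zero.
  + by move=> t1 IH1 t2 IH2; apply: cyc_add.
  + exact: cyc_scale.
  + exact: cyc_act.
Qed.

Unset Implicit Arguments.
Section Main.
Variables (k : fieldType) (char0 : [pchar k] =i pred0)
  (g : lmodType k) (brg : g -> g -> g)
  (V : lmodType k) (actV : g -> V -> V) (Theta : V -> g)
  (F : nat -> lmodType k) (brF : forall m n, F m -> F n -> F (m + n))
  (iota : V -> F 1) (HF : is_free_glie brF iota)
  (actF : forall n, g -> F n -> F n)
  (HactFV : forall a v, actF 1 a (iota v) = iota (actV a v))
  (beta : F 2 -> V)
  (T : nat -> lmodType k) (brT : forall m n, T m -> T n -> T (m + n))
  (HT : is_glie brT)
  (actT : forall n, g -> T n -> T n) (HactT : is_gaction brg brT actT)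
  (pi : forall n, F n -> T n)
  (Hpi : is_quotient_map brF actF (K2 actF beta) brT actT pi)
  (d : forall i, T i.+1 -> T i)
  (Hd : is_LL_differential actV Theta brT actT (fun v => pi 1 (iota v)) d).

Definition j v := pi 1 (iota v).

Lemma HTb m n : bilin (brT m n). Proof. by case: HT. Qed.
Lemma HT0 (x : T 0) : x = 0. Proof. by case: HT => H _ _ _; apply: H. Qed.
Lemma HaTb n : bilin (actT n). Proof. by case: HactT => H _; case: (H n). Qed.
Lemma HaTm n a b x : actT n (brg a b) x = actT n a (actT n b x) - actT n b (actT n a x).
Proof. by case: HactT => H _; case: (H n). Qed.
Lemma HaTd m n a x y :
  actT (m + n) a (brT m n x y) = brT m n (actT m a x) y + brT m n x (actT n a y).
Proof. by case: HactT => _ H; apply: H. Qed.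
Lemma pilin n : linear (pi n). Proof. by case: Hpi => [[H _] _ _ _]. Qed.
Lemma pibr m n x y : pi (m + n)%N (brF m n x y) = brT m n (pi m x) (pi n y).
Proof. by case: Hpi => [[_ H] _ _ _]. Qed.
Lemma pisurj n (t : T n) : exists x, pi n x = t.
Proof. by case: Hpi => _ _ H _. Qed.
Lemma pieq n a x : pi n (actF n a x) = actT n a (pi n x).
Proof. by case: Hpi => _ H _ _. Qed.
Lemma HF0 (x : F 0) : x = 0. Proof. by case: HF => [[H _ _ _] _ _]. Qed.
Lemma HFb m n : bilin (brF m n). Proof. by case: HF => [[_ H _ _] _ _]. Qed.
Lemma iolin : linear iota. Proof. by case: HF. Qed.
Lemma jlin : linear j.
Proof. by move=> c u v; rewrite /j iolin pilin. Qed.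
Lemma jact a v : j (actV a v) = actT 1 a (j v).
Proof. by rewrite /j -HactFV pieq. Qed.
Lemma Hdlin i : linear (d i). Proof. by case: Hd. Qed.

Lemma vanishT (W : lmodType k) n (f : T n.+2 -> W) : linear f ->
  (forall v y, f (brT 1 n.+1 (j v) y) = 0) -> forall t, f t = 0.
Proof.
move=> fl fv t; have [x <-] := pisurj n.+2 t.
pose Q m : F m -> Prop := match m return F m -> Prop with
  | m'.+2 => fun x => forall f : T m'.+2 -> W, linear f ->
       (forall v y, f (brT 1 m'.+1 (j v) y) = 0) -> f (pi m'.+2 x) = 0
  | _ => fun _ => True end.
suff H : forall m (x : F m), Gen k V F brF iota m x -> Q m x.
  exact: (H _ x (Gen_all k V F brF iota HF _ x) f fl fv).
move=> m {}x; elim=> {m x}.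
- by [].
- move=> m v y _ _; case: m y => [|m] y //= f1 f1l f1v.
  by rewrite (pibr 1 m.+1) f1v.
- move=> [|[|m]] //= f1 f1l f1v.
  by rewrite (lin0 (pilin _)) (lin0 f1l).
- move=> [|[|m]] x y _ IHx _ IHy //= f1 f1l f1v.
  by rewrite (linD (pilin _)) (linD f1l) (IHx f1 f1l f1v) (IHy f1 f1l f1v) addr0.
- move=> [|[|m]] c x _ IHx //= f1 f1l f1v.
  by rewrite (linZ (pilin _)) (linZ f1l) (IHx f1 f1l f1v) scaler0.
Qed.

Lemma T1 (t : T 1) : exists u, t = j u.
Proof.
have [x <-] := pisurj 1 t.
pose Q m : F m -> Prop := match m return F m -> Prop with
  | 1 => fun x => exists u, pi 1 x = j u
  | _ => fun _ => True end.
suff H : forall m (x : F m), Gen k V F brF iota m x -> Q m x.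
  have [u ->] := H _ x (Gen_all k V F brF iota HF _ x); by exists u.
move=> m {}x; elim=> {m x}.
- by move=> v; exists v.
- move=> [|m] v y _ _ //=; exists 0.
  rewrite (HF0 y) (lin0 ((HFb 1 0).1 _)) (lin0 (pilin _)).
  by rewrite (lin0 jlin).
- move=> [|[|m]] //=; exists 0; by rewrite (lin0 (pilin _)) (lin0 jlin).
- move=> [|[|m]] x y _ IHx _ IHy //=.
  case: IHx => u Hu; case: IHy => w Hw; exists (u + w).
  by rewrite (linD (pilin _)) Hu Hw (linD jlin).
- move=> [|[|m]] c x _ IHx //=.
  case: IHx => u Hu; exists (c *: u).
  by rewrite (linZ (pilin _)) Hu (linZ jlin).
Qed.

Definition evT i (t : tm g) : T i.+1 -> T i := ev (homact (actT i.+1) (actT i)) (d i) t.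
Definition evV (t : tm g) : V -> g := ev (homact actV brg) Theta t.

Lemma evT_lin i t : linear (evT i t).
Proof.
rewrite /evT; elim: t => /= [|||c t IH|a t IH].
- exact: Hdlin.
- by move=> c u v; rewrite scaler0 addr0.
- move=> t1 IH1 t2 IH2 c u v.
  by rewrite IH1 IH2 scalerDr addrACA.
- move=> c' u v; rewrite IH scalerDr !scalerA mulrC //.
- move=> c u v; rewrite /homact.
  have al := (HaTb i.+1).1 a; have al' := (HaTb i).1 a.
  by rewrite al IH al' IH opprD scalerBr addrACA.
Qed.

Lemma two_neq0 : (2%:R : k) != 0.
Proof. by have := (pcharf0P k).1 char0 2; move=> ->. Qed.

Lemma evA t u v : evT 1 t (brT 1 1 (j u) (j v)) =
  actT 1 (evV t u) (j v) + actT 1 (evV t v) (j u).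
Proof.
rewrite /evV; elim: t u v => /= [||t1 IH1 t2 IH2|c t IH|a t IH] u v.
- rewrite /evT /=; case: Hd => _ _ H3 _ _; rewrite H3 -/(j _) /lsym /lprod.
  rewrite (linZ jlin) (linD jlin) !jact scalerA mulfV ?scale1r //; exact: two_neq0.
- by rewrite !(lin0 ((HaTb 1).2 _)) addr0.
- rewrite /evT /= -!/(evT 1 _) IH1 IH2.
  by rewrite !(linD ((HaTb 1).2 _)) addrACA.
- rewrite /evT /= -!/(evT 1 _) IH.
  by rewrite !(linZ ((HaTb 1).2 _)) scalerDr.
- rewrite /evT /= -!/(evT 1 _) /homact.
  rewrite (HaTd 1 1) -[actT 1 a (j u)]jact -[actT 1 a (j v)]jact (linD (evT_lin 1 t)) !IH.
  rewrite !(linB ((HaTb 1).2 _)) !HaTm -[actT 1 a (j u)]jact -[actT 1 a (j v)]jact.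
  rewrite (linD ((HaTb 1).1 a)).
  exact: zmA.
Qed.

Lemma evB t n v (x : T n.+2) : evT n.+2 t (brT 1 n.+2 (j v) x) =
  actT n.+2 (evV t v) x - brT 1 n.+1 (j v) (evT n.+1 t x).
Proof.
rewrite /evV; elim: t v x => /= [||t1 IH1 t2 IH2|c t IH|a t IH] v x.
- by rewrite /evT /=; case: Hd => _ _ _ H4 _; rewrite H4.
- by rewrite (lin0 ((HaTb _).2 _)) (lin0 ((HTb 1 n.+1).1 _)) subr0.
- rewrite /evT /= -!/(evT _ _) IH1 IH2.
  by rewrite (linD ((HaTb _).2 _)) (linD ((HTb 1 n.+1).1 _)) opprD addrACA.
- rewrite /evT /= -!/(evT _ _) IH.
  by rewrite (linZ ((HaTb _).2 _)) (linZ ((HTb 1 n.+1).1 _)) scalerBr.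
- rewrite /evT /= -!/(evT _ _) /homact.
  rewrite (HaTd 1 n.+2) -!jact (linD (evT_lin _ t)) !IH.
  rewrite (linB ((HaTb _).1 a)) (HaTd 1 n.+1) -jact.
  rewrite (linB ((HaTb _).2 _)) HaTm (linB ((HTb 1 n.+1).1 _)).
  exact: zmB.
Qed.

Lemma ev_zero t : (forall v, evV t v = 0) -> forall i, (0 < i)%N -> forall z, evT i t z = 0.
Proof.
move=> H0 i; elim: i => [//|[|n] IH] _.
- apply: (vanishT _ 0 (evT 1 t) (evT_lin 1 t)) => v y.
  have [u ->] := T1 y.
  by rewrite evA !H0 !(lin0 ((HaTb 1).2 _)) addr0.
- apply: (vanishT _ n.+1 (evT n.+2 t) (evT_lin _ t)) => v y.
  by rewrite evB H0 (lin0 ((HaTb _).2 _)) IH // (lin0 ((HTb 1 n.+1).1 _)) subr0.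
Qed.

Definition mu i (X : V -> g) : T i.+1 -> T i :=
  match excluded_middle_informative (exists t, evV t = X) with
  | left h => evT i (proj1_sig (constructive_indefinite_description _ h))
  | right _ => fun _ => 0 end.

Lemma muE i t : (0 < i)%N -> mu i (evV t) = evT i t.
Proof.
move=> hi; rewrite /mu; case: excluded_middle_informative => [h|[]]; last by exists t.
case: constructive_indefinite_description => s /= hs.
apply: functional_extensionality => z.
have H : forall v, evV (tA s (tS (-1) t)) v = 0.
  by move=> v; rewrite /evV /= -!/(evV _) hs scaleN1r subrr.
have := ev_zero _ H i hi z.
rewrite /evT /= -!/(evT _ _) scaleN1r.
by move=> /eqP; rewrite subr_eq0 => /eqP.
Qed.

Lemma final i : (0 < i)%N ->
  exists mu : (V -> g) -> (T i.+1 -> T i),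
    let RTheta := cyc_sub (homact actV brg) Theta in
    let Ri := cyc_sub (homact (actT i.+1) (actT i)) (d i) in
    [/\ (forall X, RTheta X -> Ri (mu X)),
        ((forall X Y, RTheta X -> RTheta Y ->
           mu (fun x => X x + Y x) = (fun z => mu X z + mu Y z)) /\
         (forall (c : k) X, RTheta X -> mu (fun x => c *: X x) = (fun z => c *: mu X z))),
        (forall a X, RTheta X -> mu (homact actV brg a X) = homact (actT i.+1) (actT i) a (mu X)),
        (forall phi, Ri phi -> exists2 X, RTheta X & mu X = phi)
      & mu Theta = d i].
Proof.
move=> hi; exists (mu i); intros RTheta Ri.
split.
- move=> X /cyc_ev [t <-]; rewrite -/(evV t) muE //; apply/cyc_ev; by exists t.
- split.
  + move=> X Y /cyc_ev [t <-] /cyc_ev [s <-].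
    rewrite -/(evV t) -/(evV s).
    have -> : (fun x => evV t x + evV s x) = evV (tA t s) by [].
    by rewrite !muE.
  + move=> c X /cyc_ev [t <-].
    rewrite -/(evV t).
    have -> : (fun x => c *: evV t x) = evV (tS c t) by [].
    by rewrite !muE.
- move=> a X /cyc_ev [t <-].
  rewrite -/(evV t).
  have -> : homact actV brg a (evV t) = evV (tAct a t) by [].
  by rewrite !muE.
- move=> phi /cyc_ev [t <-]; exists (evV t); first by apply/cyc_ev; exists t.
  by rewrite muE.
- exact: (muE i tG hi).
Qed.
End Main.

Unset Implicit Arguments.
Theorem mainTheorem10
  (k : fieldType) (char0 : [pchar k] =i pred0)
  (g : lmodType k) (brg : g -> g -> g)
  (V : lmodType k) (actV : g -> V -> V) (Theta : V -> g)
  (HLL : is_LL_triple brg actV Theta)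
  (* free graded Lie algebra F on V[1], with g acting by derivations *)
  (F : nat -> lmodType k) (brF : forall m n, F m -> F n -> F (m + n))
  (iota : V -> F 1) (HF : is_free_glie brF iota)
  (actF : forall n, g -> F n -> F n) (HactF : is_gaction brg brF actF)
  (HactFV : forall a v, actF 1 a (iota v) = iota (actV a v))
  (* beta : F_{-2} = S^2 V -> V, [u,v] |-> {u,v} *)
  (beta : F 2 -> V) (Hbeta_lin : linear beta)
  (Hbeta : forall u v, beta (brF 1 1 (iota u) (iota v)) = lsym actV Theta u v)
  (* T_{<= -1} = F / K_bullet *)
  (T : nat -> lmodType k) (brT : forall m n, T m -> T n -> T (m + n))
  (HT : is_glie brT)
  (actT : forall n, g -> T n -> T n) (HactT : is_gaction brg brT actT)
  (pi : forall n, F n -> T n)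
  (Hpi : is_quotient_map brF actF (K2 actF beta) brT actT pi)
  (* the differential *)
  (d : forall i, T i.+1 -> T i)
  (Hd : is_LL_differential actV Theta brT actT (fun v => pi 1 (iota v)) d) :
  forall i, (0 < i)%N ->
  exists mu : (V -> g) -> (T i.+1 -> T i),
    let RTheta := cyc_sub (homact actV brg) Theta in
    let Ri := cyc_sub (homact (actT i.+1) (actT i)) (d i) in
    [/\ (forall X, RTheta X -> Ri (mu X)),
        (* mu is linear on R_Theta *)
        ((forall X Y, RTheta X -> RTheta Y ->
           mu (fun x => X x + Y x) = (fun z => mu X z + mu Y z)) /\
         (forall (c : k) X, RTheta X -> mu (fun x => c *: X x) = (fun z => c *: mu X z))),
        (forall a X, RTheta X -> mu (homact actV brg a X) = homact (actT i.+1) (actT i) a (mu X)),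
        (forall phi, Ri phi -> exists2 X, RTheta X & mu X = phi)
      & mu Theta = d i].
Proof.
move=> i hi.
exact: (@final k char0 g brg V actV Theta F brF iota HF actF HactFV beta T brT HT actT HactT pi Hpi d Hd i hi).
Qed.
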